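(* Let $n\ge 2$, $m\ge 1$, and let $T_{ij}\in\mathbb R^{m\times m}$ ($i,j\in\{1,\dots,n\}$) be similarity matrices with $T_{ij}=T_{ji}^\top$. Suppose that for every pair $i,j$ the maximization $\max_{P\in\mathcal P_m}\operatorname{tr}(P^\top T_{ij})$ has a unique maximizer $P_{ij}\in\mathcal P_m$, and that these maximizers are consistent: $P_{ij}P_{jk}=P_{ik}$ for all $i,j,k\in\{1,\dots,n\}$. Then Algorithm 1 (run with any Maximum Spanning Tree, any processing order of its edges, any initial permutation matrices, and any sequence of coordinate updates) outputs permutation matrices $A_1,\dots,A_n$ that attain the maximum in $$\max_{A_1,\dots,A_n\in\mathcal P_m}\ \mathcal L(A_1,\dots,A_n):=\sum_{i=1}^n\sum_{j=1}^n\operatorname{tr}(A_iT_{ij}A_j^\top).$$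
   Context: $\mathcal P_m$ denotes the set of $m\times m$ permutation matrices. Define $f(T_{ij}):=\max_{P\in\mathcal P_m}\operatorname{tr}(P^\top T_{ij})$. Algorithm 1 (input: $T_{ij}$ for $i,j\in\{1,\dots,n\}$): (1) Form the complete undirected graph $G$ on vertices $v_1,\dots,v_n$ where edge $(v_i,v_j)$, $i\ne j$, has weight $f(T_{ij})$, and compute a Maximum Spanning Tree with edge set $E'$. (2) Set $S_i\leftarrow\{v_i\}$ for each $i$ and initialize each $A_i$ to an arbitrary element of $\mathcal P_m$. (3) For each edge $(v_i,v_j)\in E'$ (in some order): compute $\hat P=\arg\max_{P\in\mathcal P_m}\operatorname{tr}(P^\top A_iT_{ij}A_j^\top)$; set $A_{j'}\leftarrow \hat P A_{j'}$ for every $v_{j'}\in S_j$; let $S'=S_i\cup S_j$ and set $S_k\leftarrow S'$ for every $v_k\in S'$. (4) Coordinate updates: repeatedly pick $i\in\{1,\dots,n\}$ and replace $A_i$ by a maximizer $\arg\max_{A\in\mathcal P_m}\operatorname{tr}\big(A^\top\sum_{j\ne i}A_jT_{ij}\big)$, until convergence. *)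

(* Defs.v *)
From HB Require Import structures.
From mathcomp Require Import all_boot all_order all_algebra all_fingroup.
Set Implicit Arguments. Unset Strict Implicit. Unset Printing Implicit Defensive.
Import Order.TTheory GRing.Theory Num.Theory.
Local Open Scope ring_scope.

(* The set P_m of m x m permutation matrices is { perm_mx s | s : 'S_m }. *)

Definition is_argmax_perm (R : realFieldType) (m : nat) (M : 'M[R]_m) (s : 'S_m) : Prop :=
  forall s' : 'S_m, \tr ((perm_mx s')^T *m M) <= \tr ((perm_mx s)^T *m M).

(* f(M) = max_{P in P_m} tr(P^T M)  (the big max is seeded with one of its own terms) *)
Definition fval (R : realFieldType) (m : nat) (M : 'M[R]_m) : R :=
  \big[Num.max/ \tr ((perm_mx (1 : 'S_m))^T *m M)]_(s : 'S_m) \tr ((perm_mx s)^T *m M).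

Definition edge_rel (n : nat) (E : seq ('I_n * 'I_n)) : rel 'I_n :=
  fun x y => ((x, y) \in E) || ((y, x) \in E).

Definition spanning_tree (n : nat) (E : seq ('I_n * 'I_n)) : Prop :=
  [/\ size E = n.-1, all (fun e => e.1 != e.2) E
    & forall x y : 'I_n, connect (edge_rel E) x y].

Definition tree_weight (R : realFieldType) (n m : nat)
  (T : 'I_n -> 'I_n -> 'M[R]_m) (E : seq ('I_n * 'I_n)) : R :=
  \sum_(e <- E) fval (T e.1 e.2).

Definition max_spanning_tree (R : realFieldType) (n m : nat)
  (T : 'I_n -> 'I_n -> 'M[R]_m) (E : seq ('I_n * 'I_n)) : Prop :=
  spanning_tree E /\
  forall E', spanning_tree E' -> tree_weight T E' <= tree_weight T E.

(* Step (3) for one edge (v_i, v_j): state (A, S) -> (A', S'). *)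
Definition merge_step (R : realFieldType) (n m : nat) (T : 'I_n -> 'I_n -> 'M[R]_m)
  (A : 'I_n -> 'M[R]_m) (S : 'I_n -> {set 'I_n}) (e : 'I_n * 'I_n)
  (A' : 'I_n -> 'M[R]_m) (S' : 'I_n -> {set 'I_n}) : Prop :=
  let i := e.1 in let j := e.2 in
  exists s : 'S_m,
    is_argmax_perm (A i *m T i j *m (A j)^T) s /\
    (forall k, A' k = if k \in S j then perm_mx s *m A k else A k) /\
    (forall k, S' k = if k \in S i :|: S j then S i :|: S j else S k).

Fixpoint merge_run (R : realFieldType) (n m : nat) (T : 'I_n -> 'I_n -> 'M[R]_m)
  (A : 'I_n -> 'M[R]_m) (S : 'I_n -> {set 'I_n}) (E : seq ('I_n * 'I_n))
  (A' : 'I_n -> 'M[R]_m) : Prop :=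
  match E with
  | [::] => forall k, A' k = A k
  | e :: E1 => exists A1 S1, merge_step T A S e A1 S1 /\ merge_run T A1 S1 E1 A'
  end.

(* Step (4), one coordinate update at index i:
   A_i <- argmax_{A in P_m} tr(A^T sum_{j<>i} A_j T_ji)
   (the block-coordinate maximization of L). *)
Definition coord_step (R : realFieldType) (n m : nat) (T : 'I_n -> 'I_n -> 'M[R]_m)
  (A : 'I_n -> 'M[R]_m) (i : 'I_n) (A' : 'I_n -> 'M[R]_m) : Prop :=
  exists s : 'S_m,
    is_argmax_perm (\sum_(j < n | j != i) A j *m T j i) s /\
    A' i = perm_mx s /\ (forall k, k != i -> A' k = A k).

Fixpoint coord_run (R : realFieldType) (n m : nat) (T : 'I_n -> 'I_n -> 'M[R]_m)
  (A : 'I_n -> 'M[R]_m) (idx : seq 'I_n) (A' : 'I_n -> 'M[R]_m) : Prop :=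
  match idx with
  | [::] => forall k, A' k = A k
  | i :: idx1 => exists A1, coord_step T A i A1 /\ coord_run T A1 idx1 A'
  end.

(* A is a possible output of Algorithm 1 (any MST, any edge order/orientation,
   any initial permutation matrices, any argmax choices, any finite sequence of
   coordinate updates). *)
Definition algorithm1_output (R : realFieldType) (n m : nat)
  (T : 'I_n -> 'I_n -> 'M[R]_m) (A : 'I_n -> 'M[R]_m) : Prop :=
  exists (E : seq ('I_n * 'I_n)) (A0 Amid : 'I_n -> 'M[R]_m) (idx : seq 'I_n),
    [/\ max_spanning_tree T E, (forall i, is_perm_mx (A0 i)),
        merge_run T A0 (fun i => [set i]) E Amid & coord_run T Amid idx A].

Definition Lval (R : realFieldType) (n m : nat) (T : 'I_n -> 'I_n -> 'M[R]_m)
  (A : 'I_n -> 'M[R]_m) : R :=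
  \sum_(i < n) \sum_(j < n) \tr (A i *m T i j *m (A j)^T).

(* Main.v *)
Require Import Defs.
From HB Require Import structures.
From mathcomp Require Import all_boot all_order all_algebra all_fingroup.
From mathcomp Require Import lra.
Import Order.TTheory GRing.Theory Num.Theory.
Local Open Scope ring_scope.
Set Implicit Arguments. Unset Strict Implicit. Unset Printing Implicit Defensive.

Lemma perm_mx_inj (R : realFieldType) m : injective (@perm_mx R m).
Proof.
move=> s t H; apply/permP=> i; have := congr1 (fun M : 'M[R]_m => M i (s i)) H.
rewrite /perm_mx !mxE eqxx.
by case: eqP => // _ /eqP; rewrite oner_eq0.
Qed.

Definition v (R : realFieldType) m (M : 'M[R]_m) (s : 'S_m) := \tr ((perm_mx s)^T *m M).

Lemma v_conj (R : realFieldType) m (M : 'M[R]_m) x y s :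
  v (perm_mx x *m M *m (perm_mx y)^T) s = v M (x^-1 * s * y).
Proof.
rewrite /v !tr_perm_mx mulmxA mxtrace_mulC !mulmxA -!perm_mxM.
congr (\tr (perm_mx _ *m _)).
by rewrite !invMg invgK !mulgA.
Qed.

Lemma v_left (R : realFieldType) m (M : 'M[R]_m) x s :
  v (perm_mx x *m M) s = v M (x^-1 * s).
Proof.
have := v_conj M x 1 s; by rewrite perm_mx1 trmx1 mulmx1 mulg1.
Qed.

Lemma v_trace (R : realFieldType) m (M : 'M[R]_m) : \tr M = v M 1.
Proof. by rewrite /v perm_mx1 trmx1 mul1mx. Qed.

Lemma v_sum (R : realFieldType) m n (F : 'I_n -> 'M[R]_m) (Pr : pred 'I_n) s :
  v (\sum_(j < n | Pr j) F j) s = \sum_(j < n | Pr j) v (F j) s.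
Proof. by rewrite /v mulmx_sumr raddf_sum. Qed.

Lemma argmax_v (R : realFieldType) m (M : 'M[R]_m) s :
  is_argmax_perm M s <-> forall t, v M t <= v M s.
Proof. by []. Qed.

Lemma argmax_conj (R : realFieldType) m (M : 'M[R]_m) x y s :
  is_argmax_perm (perm_mx x *m M *m (perm_mx y)^T) s -> is_argmax_perm M (x^-1 * s * y).
Proof.
move=> /argmax_v H; apply/argmax_v => t; have := H (x * t * y^-1)%g.
by rewrite !v_conj !mulgA mulVg mul1g mulgKV.
Qed.

Section Main.
Variables (R : realFieldType) (n m : nat) (T : 'I_n -> 'I_n -> 'M[R]_m) (P : 'I_n -> 'I_n -> 'S_m).
Hypothesis HP : forall i j (s : 'S_m), is_argmax_perm (T i j) s <-> s = P i j.
Hypothesis Hcons : forall i j k, (P i j * P j k)%g = P i k.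

Lemma Paa a : P a a = 1%g.
Proof. by apply: (mulgI (P a a)); rewrite mulg1 Hcons. Qed.

Definition Inv (A : 'I_n -> 'M[R]_m) (S : 'I_n -> {set 'I_n}) :=
 [/\ forall k, k \in S k, forall k a, a \in S k -> S a = S k &
   exists al : 'I_n -> 'S_m, (forall k, A k = perm_mx (al k)) /\
      forall a b, b \in S a -> (al b = al a * P a b)%g].

Lemma step_inv A S e A' S' : merge_step T A S e A' S' -> Inv A S ->
  Inv A' S' /\ (forall k, S k \subset S' k) /\ e.2 \in S' e.1.
Proof.
case: e => i j /= [s [Hs [HA HS]]] [Hr Hcl [al [Hal Hc']]].
rewrite !Hal in Hs.
have hs : (s * al j = al i * P i j)%g.
  have /HP <- := argmax_conj Hs. by rewrite -!mulgA mulKVg.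
set U := S i :|: S j.
have sub : forall x a, a \in S x -> a \in S i -> x \in S i.
  by move=> x a ax ai; rewrite -(Hcl _ _ ai) (Hcl _ _ ax) Hr.
have subj : forall x a, a \in S x -> a \in S j -> x \in S j.
  by move=> x a ax ai; rewrite -(Hcl _ _ ai) (Hcl _ _ ax) Hr.
have nU : forall x a, a \in S x -> x \notin U -> a \notin U.
  move=> x a ax; apply: contra; rewrite !inE => /orP [/(sub _ _ ax)|/(subj _ _ ax)] -> //.
  by rewrite orbT.
split; last split.
- split.
  + by move=> k; rewrite HS; case: ifP => // ->.
  + move=> k a; rewrite !HS; case: ifP => [kU aU|kU ak].
      by rewrite aU.
    by rewrite (negbTE (nU _ _ ak (negbT kU))); apply: Hcl.
  + exists (fun k => if k \in S j then (s * al k)%g else al k); split.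
      by move=> k; rewrite HA Hal; case: ifP => //; rewrite perm_mxM.
    move=> a b; rewrite HS; case: ifP => [aU|aU ba]; last first.
      have bU := nU _ _ ba (negbT aU).
      have aj : a \notin S j by apply: contra (negbT aU); rewrite inE => ->; rewrite orbT.
      have bj : b \notin S j by apply: contra bU; rewrite inE => ->; rewrite orbT.
      by rewrite (negbTE aj) (negbTE bj); apply: Hc'.
    move=> bU.
    case: ifP => bj; case: ifP => aj.
    * by rewrite (Hc' a b) ?mulgA // (Hcl _ _ aj).
    * have ai : a \in S i by move: aU; rewrite inE aj orbF.
      have ia : i \in S a by rewrite (Hcl _ _ ai).
      by rewrite (Hc' j b) // mulgA hs (Hc' a i) // -!mulgA !Hcons.
    * have bi : b \in S i by move: bU; rewrite inE bj orbF.
      by rewrite (Hc' j a) // mulgA hs -!mulgA !Hcons -(Hc' i b).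
    * have ai : a \in S i by move: aU; rewrite inE aj orbF.
      have bi : b \in S i by move: bU; rewrite inE bj orbF.
      by apply: Hc'; rewrite (Hcl _ _ ai).
- move=> k; rewrite HS; case: ifP => // kU.
  apply/subsetP => a ak; move: kU; rewrite !inE => /orP [ki|kj].
    by rewrite -(Hcl _ _ ki) ak.
  by rewrite -(Hcl _ _ kj) ak orbT.
- rewrite HS; have iU : i \in U by rewrite inE Hr.
  by rewrite iU inE Hr orbT.
Qed.

Lemma run_inv E A S A' : merge_run T A S E A' -> Inv A S ->
  exists S', Inv A' S' /\ (forall k, S k \subset S' k) /\
    forall e, e \in E -> e.2 \in S' e.1.
Proof.
elim: E A S => [|e E IH] A S /=.
  move=> HA [Hr Hcl [al [Hal Hc']]]; exists S; split; last by split.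
  by split => //; exists al; split => // k; rewrite HA.
move=> [A1 [S1 [Hst Hrun]]] HI.
have [HI1 [Hsub1 He1]] := step_inv Hst HI.
have [S' [HI' [Hsub' He']]] := IH _ _ Hrun HI1.
exists S'; split => //; split.
  by move=> k; apply: subset_trans (Hsub1 k) (Hsub' k).
move=> e0; rewrite inE => /orP [/eqP ->|]; last exact: He'.
exact: (subsetP (Hsub' _)).
Qed.

Lemma conn_S (S : 'I_n -> {set 'I_n}) E :
  (forall k, k \in S k) -> (forall k a, a \in S k -> S a = S k) ->
  (forall e, e \in E -> e.2 \in S e.1) ->
  forall x y, connect (edge_rel E) x y -> y \in S x.
Proof.
move=> Hr Hcl He x y /connectP [p Hp ->] {y}.
elim: p x Hp => [|z p IH] x /=; first by move=> _; apply: Hr.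
case/andP => Hxz Hp.
have zx : z \in S x.
  move: Hxz; rewrite /edge_rel => /orP [/He //|/He /= xz].
  by rewrite (Hcl _ _ xz) Hr.
by rewrite -(Hcl _ _ zx); apply: IH.
Qed.

Definition Full (A : 'I_n -> 'M[R]_m) :=
  exists al : 'I_n -> 'S_m, (forall k, A k = perm_mx (al k)) /\
      forall a b, (al b = al a * P a b)%g.

Hypothesis Hn : (2 <= n)%N.

Lemma coord_full A i A' : Full A -> coord_step T A i A' -> Full A'.
Proof.
move=> [al [Hal Hf]] [s [Hs [Hi Hk]]].
have h0 : (0 < n)%N by apply: leq_trans Hn.
have h1 : (1 < n)%N by [].
pose j0 := if i == Ordinal h0 then Ordinal h1 else Ordinal h0.
have j0i : j0 != i.
  rewrite /j0; case: (eqVneq i (Ordinal h0)) => [->|ne]; last by rewrite eq_sym.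
  by apply/eqP => /(congr1 val).
have Hv : forall t, v (\sum_(j < n | j != i) A j *m T j i) t =
    \sum_(j < n | j != i) v (T j i) ((al j)^-1 * t).
  by move=> t; rewrite v_sum; apply: eq_bigr => j _; rewrite Hal v_left.
have Hm := (proj1 (argmax_v _ _) Hs) (al i).
rewrite !Hv (bigD1 j0) //= [X in _ <= X](bigD1 j0) //= in Hm.
have Hle : \sum_(j < n | (j != i) && (j != j0)) v (T j i) ((al j)^-1 * s) <=
           \sum_(j < n | (j != i) && (j != j0)) v (T j i) ((al j)^-1 * al i).
  apply: ler_sum => j _; rewrite (Hf j i) mulKg.
  exact: (proj1 (argmax_v _ _) (proj2 (HP j i _) erefl)).
have Hj0 : v (T j0 i) ((al j0)^-1 * al i) <= v (T j0 i) ((al j0)^-1 * s) by lra.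
have Harg : is_argmax_perm (T j0 i) ((al j0)^-1 * s).
  apply/argmax_v => t; apply: le_trans Hj0.
  rewrite (Hf j0 i) mulKg.
  exact: (proj1 (argmax_v _ _) (proj2 (HP j0 i _) erefl)).
have /HP Heq := Harg.
have es : (s = al i)%g by rewrite (Hf j0 i) -Heq mulKVg.
exists al; split => // k; case: (eqVneq k i) => [->|ki]; first by rewrite Hi es.
by rewrite Hk // Hal.
Qed.

Lemma coord_run_full A idx A' : Full A -> coord_run T A idx A' -> Full A'.
Proof.
elim: idx A => [|i idx IH] A /=.
  by move=> [al [Hal Hf]] HA; exists al; split => // k; rewrite HA.
by move=> HF [A1 [Hst Hr]]; apply: IH Hr; apply: coord_full HF Hst.
Qed.

End Main.

Theorem theorem1 (R : realFieldType) (n m : nat)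
  (T : 'I_n -> 'I_n -> 'M[R]_m) (P : 'I_n -> 'I_n -> 'S_m) :
  (2 <= n)%N -> (1 <= m)%N ->
  (forall i j, T i j = (T j i)^T) ->
  (forall i j (s : 'S_m), is_argmax_perm (T i j) s <-> s = P i j) ->
  (forall i j k, (perm_mx (P i j) : 'M[R]_m) *m perm_mx (P j k) = perm_mx (P i k)) ->
  forall A : 'I_n -> 'M[R]_m, algorithm1_output T A ->
  (forall i, is_perm_mx (A i)) /\
  (forall B : 'I_n -> 'S_m, Lval T (fun i => perm_mx (B i)) <= Lval T A).
Proof.
move=> Hn Hm Hsym HP Hc A [E [A0 [Amid [idx [[[_ _ Hconn] _] HA0 Hrun Hcr]]]]].
have Hcons : forall i j k, (P i j * P j k)%g = P i k.
  by move=> i j k; apply: (@perm_mx_inj R); rewrite perm_mxM.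
pose al0 i := odflt 1%g [pick s | A0 i == perm_mx s].
have Hal0 : forall i, A0 i = perm_mx (al0 i).
  move=> i; rewrite /al0; case: pickP => [s /eqP //|H].
  by case/is_perm_mxP: (HA0 i) => s Hs; move: (H s); rewrite Hs eqxx.
have HI0 : Inv P A0 (fun i => [set i]).
  split.
  - by move=> k; rewrite set11.
  - by move=> k a /set1P ->.
  - exists al0; split => // a b /set1P ->; by rewrite Paa // mulg1.
have [S' [[Hr Hcl [al [Hal Hc']]] [_ He]]] := run_inv HP Hcons Hrun HI0.
have HF : Full P Amid.
  exists al; split => // a b; apply: Hc'.
  exact: (conn_S Hr Hcl He (Hconn a b)).
have [bl [Hbl Hf]] := coord_run_full HP Hn HF Hcr.
split; first by move=> i; rewrite Hbl perm_mx_is_perm.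
move=> B; rewrite /Lval; apply: ler_sum => i _; apply: ler_sum => j _.
rewrite !Hbl !v_trace !v_conj !mulg1 (Hf i j) mulKg.
exact: (proj1 (argmax_v _ _) (proj2 (HP i j _) erefl)).
Qed.
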